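(* Let $C_0>c_0>0$ and $L>R>0$, and let $Q_L=\{(x,t):0<t<L^2,|x|<L\}$. Suppose $w$ satisfies in the viscosity sense $$\partial_tw-\mathcal P^+(D^2w)\le0\ \text{in }Q_L,\qquad w(x,0)\le c_0\ \text{on }\{t=0\},\qquad w\le C_0\ \text{in }\overline{Q_L}.$$ Then there is a constant $C$ depending only on $C_0,d,\Lambda$ such that $w(x,t)\le c_0+C\frac{R^2}{L^2}$ for $(x,t)\in\overline{Q_R}$.
   Context: $\mathcal P^+(M)=\Lambda\,\mathrm{Tr}M_+-\lambda\,\mathrm{Tr}M_-$ ($0<\lambda<\Lambda$) is Pucci's maximal operator on real symmetric $d\times d$ matrices, $M_\pm\ge0$ the positive and negative parts of $M$. *)

(* Defs.v *)
From HB Require Import structures.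
From mathcomp Require Import all_boot all_order all_algebra.
From mathcomp Require Import all_classical all_reals all_analysis.
Set Implicit Arguments. Unset Strict Implicit. Unset Printing Implicit Defensive.
Import Order.TTheory GRing.Theory Num.Theory.
Import numFieldNormedType.Exports.
Local Open Scope ring_scope.
Local Open Scope classical_set_scope.

Section Defs.
Variables (R : realType) (d : nat).

Definition enorm (x : 'rV[R]_d) : R := Num.sqrt (\sum_i (x ord0 i) ^+ 2).

Definition Qcyl (L : R) (x : 'rV[R]_d) (t : R) : Prop :=
  0 < t < L ^+ 2 /\ enorm x < L.
Definition Qcyl_closed (L : R) (x : 'rV[R]_d) (t : R) : Prop :=
  0 <= t <= L ^+ 2 /\ enorm x <= L.

Definition psd (M : 'M[R]_d) : Prop :=
  M^T = M /\ forall v : 'rV[R]_d, 0 <= (v *m M *m v^T) ord0 ord0.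

Definition pos_neg_parts (M P N : 'M[R]_d) : Prop :=
  psd P /\ psd N /\ M = P - N /\ P *m N = 0.

Definition Mpos (M : 'M[R]_d) : 'M[R]_d :=
  xget 0 [set P | exists N, pos_neg_parts M P N].
Definition Mneg (M : 'M[R]_d) : 'M[R]_d := Mpos M - M.

Definition pucci_plus (lam Lam : R) (M : 'M[R]_d) : R :=
  Lam * \tr (Mpos M) - lam * \tr (Mneg M).

Definition ebasis (i : 'I_d) : 'rV[R]_d := delta_mx ord0 i.
Definition dx (i : 'I_d) (phi : 'rV[R]_d -> R -> R) : 'rV[R]_d -> R -> R :=
  fun x t => 'D_(ebasis i) (fun y => phi y t) x.
Definition dt (phi : 'rV[R]_d -> R -> R) : 'rV[R]_d -> R -> R :=
  fun x t => 'D_1 (fun s => phi x s) t.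
Definition hessian (phi : 'rV[R]_d -> R -> R) (x : 'rV[R]_d) (t : R) : 'M[R]_d :=
  \matrix_(i, j) dx j (dx i phi) x t.

Definition uncurry2 (f : 'rV[R]_d -> R -> R) : 'rV[R]_d * R -> R :=
  fun z => f z.1 z.2.

Definition C21 (phi : 'rV[R]_d -> R -> R) : Prop :=
  [/\ (forall x t i, derivable (fun y => phi y t) x (ebasis i)),
      (forall x t i j, derivable (fun y => dx i phi y t) x (ebasis j)),
      (forall x t, derivable (fun s => phi x s) t 1),
      continuous (uncurry2 phi) /\ continuous (uncurry2 (dt phi))
    & forall i j, continuous (uncurry2 (dx i phi)) /\
                  continuous (uncurry2 (dx j (dx i phi)))].

Definition usc_on_closed (L : R) (w : 'rV[R]_d -> R -> R) : Prop :=
  forall x t, Qcyl_closed L x t -> forall e : R, 0 < e ->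
    exists2 del : R, 0 < del & forall y s, Qcyl_closed L y s ->
      enorm (y - x) < del -> `|s - t| < del -> w y s < w x t + e.

Definition visc_subsol (lam Lam L : R) (w : 'rV[R]_d -> R -> R) : Prop :=
  forall (phi : 'rV[R]_d -> R -> R) (x0 : 'rV[R]_d) (t0 : R),
    C21 phi -> Qcyl L x0 t0 ->
    (exists2 r : R, 0 < r & forall y s, Qcyl L y s ->
        enorm (y - x0) < r -> `|s - t0| < r ->
        w y s - phi y s <= w x0 t0 - phi x0 t0) ->
    dt phi x0 t0 - pucci_plus lam Lam (hessian phi x0 t0) <= 0.

End Defs.

(* Main.v *)
Require Import Defs.
From HB Require Import structures.
From mathcomp Require Import all_boot all_order all_algebra.
From mathcomp Require Import all_classical all_reals all_analysis.
From mathcomp Require Import ring lra.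
Import Order.TTheory GRing.Theory Num.Theory.
Import numFieldNormedType.Exports.
Local Open Scope ring_scope.
Local Open Scope classical_set_scope.


Lemma usc_attains_max (R : realType) (T : topologicalType) (K : set T) (G : T -> R) (B : R) :
  compact K -> K !=set0 -> (forall q, K q -> G q <= B) ->
  (forall p, K p -> forall e : R, 0 < e -> nbhs p [set q | K q -> G q < G p + e]) ->
  exists2 p, K p & forall q, K q -> G q <= G p.
Proof.
move=> cK [k0 Kk0] GB usc.
pose E := [set y | exists2 q, K q & G q = y].
have hs : has_sup E.
  split; first by exists (G k0), k0.
  by exists B => y [q Kq <-]; exact: GB.
pose F := filter_from [set e : R | 0 < e] (fun e => [set q | K q /\ sup E - e < G q]).
have FF : ProperFilter F.
  apply: filter_from_proper.
    apply: filter_from_filter; first by exists 1; rewrite /= ltr01.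
    move=> i j /= i0 j0; exists (Num.min i j); first by rewrite /= lt_min i0 j0.
    move=> q [Kq Hq]; split; split => //.
      by apply: le_lt_trans Hq; rewrite lerD2l lerN2 ge_min lexx.
    by apply: le_lt_trans Hq; rewrite lerD2l lerN2 ge_min lexx orbT.
  move=> e /= e0; have [y [q Kq <-] Hy] := sup_adherent e0 hs.
  by exists q.
have FK : F K by exists 1; rewrite /= ?ltr01 // => q [].
have [p [Kp clp]] := cK F FF FK.
exists p => // q Kq.
have Gq : G q <= sup E by apply: sup_upper_bound => //; exists q.
apply: (le_trans Gq).
apply/ler_addgt0Pr => e e0.
have e20 : 0 < e / 2 by rewrite divr_gt0.
have [z [[Kz Hz] Uz]] : ([set q | K q /\ sup E - e / 2 < G q] `&` [set q | K q -> G q < G p + e / 2]) !=set0.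
  apply: clp; first by exists (e / 2).
  exact: usc.
have := Uz Kz => Hz2.
have : sup E - e / 2 < G p + e / 2 by apply: lt_trans Hz Hz2.
rewrite ltrBlDr -addrA -splitr => /ltW //.
Qed.

Section T.

Variables (R : realType) (d : nat).

Lemma cont_sum (T : topologicalType) (I : Type) (r : seq I) (f : I -> T -> R) :
  (forall i, continuous (f i)) -> continuous (fun x => \sum_(i <- r) f i x).
Proof.
move=> fc; elim: r => [|a r IH].
  have -> : (fun x => \sum_(i <- [::]) f i x) = fun=> 0 by apply: funext => y; rewrite big_nil.
  exact: cst_continuous.
have -> : (fun x => \sum_(i <- a :: r) f i x) = f a + (fun x => \sum_(i <- r) f i x).
  by apply: funext => y; rewrite big_cons.
by move=> x; apply: continuousD; [exact: fc | exact: IH].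
Qed.

Definition S2 (x : 'rV[R]_d) : R := \sum_i (x ord0 i) ^+ 2.

Lemma S2_continuous : continuous S2.
Proof.
apply: cont_sum => i x.
have -> : (fun x : 'rV[R]_d => x ord0 i ^+ 2) = (fun x => x ord0 i) \* (fun x => x ord0 i).
  by apply: funext => y; rewrite /= expr2.
by apply: continuousM; exact: coord_continuous.
Qed.

Lemma enormE x : enorm x = Num.sqrt (S2 x).
Proof. by []. Qed.

Lemma enorm_continuous : continuous (@enorm R d).
Proof.
move=> x; apply: (@continuous_comp _ _ _ S2 Num.sqrt).
  exact: S2_continuous.
exact: sqrt_continuous.
Qed.

Lemma enorm_sub_continuous (x : 'rV[R]_d) : continuous (fun y : 'rV[R]_d => enorm (y - x)).
Proof.
move=> y; apply: (@continuous_comp _ _ _ (fun y : 'rV[R]_d => y - x) (@enorm R d)).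
  have H := @continuousB _ _ _ id (fun=> x) y (fun A (hA : nbhs y A) => hA) (@cst_continuous _ _ x y); exact: H.
exact: enorm_continuous.
Qed.

Lemma enorm0 : enorm (0 : 'rV[R]_d) = 0.
Proof. by rewrite enormE /S2 big1 ?sqrtr0 // => i _; rewrite mxE expr0n. Qed.

Lemma nbhs_enorm (x : 'rV[R]_d) (e : R) : 0 < e -> nbhs x [set y | enorm (y - x) < e].
Proof.
move=> e0.
have H := enorm_sub_continuous x x.
have H2 : nbhs ((fun y : 'rV[R]_d => enorm (y - x)) x) (ball (0:R) e).
  by rewrite /= subrr enorm0; exact: nbhsx_ballx.
have H3 := H _ H2.
near=> y.
have : ball (0:R) e (enorm (y - x)) by near: y.
rewrite /ball /= sub0r normrN.
move=> h; apply: le_lt_trans h; exact: ler_norm.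
Unshelve. all: by end_near.
Qed.

Lemma nbhs_cyl (x : 'rV[R]_d) (t e : R) : 0 < e ->
  nbhs (x, t) [set z | enorm (z.1 - x) < e /\ `|z.2 - t| < e].
Proof.
move=> e0; exists ([set y | enorm (y - x) < e], [set s | `|s - t| < e]) => /=.
  split; first exact: nbhs_enorm.
  have := nbhsx_ballx t e e0; apply: filterS => s; rewrite /ball /= distrC //.
by move=> [y s] [/= ? ?].
Qed.

Lemma psd_scalar (c : R) : 0 <= c -> psd (c%:M : 'M[R]_d).
Proof.
move=> c0; split; first by rewrite tr_scalar_mx.
move=> v; rewrite mul_mx_scalar -scalemxAl mxE.
apply: mulr_ge0 => //; rewrite mxE; apply: sumr_ge0 => j _.
by rewrite mxE -expr2 sqr_ge0.
Qed.

Lemma pucci_scalar (lam Lam c : R) : lam <= Lam -> 0 < c ->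
  pucci_plus lam Lam (c%:M : 'M[R]_d) <= Lam * (c *+ d).
Proof.
move=> lL c0.
set M := (c%:M : 'M[R]_d).
have ex : exists P, [set P | exists N, pos_neg_parts M P N] P.
  exists M; exists 0; split; first exact/psd_scalar/ltW.
  split.
    have -> : (0 : 'M[R]_d) = (0 : R)%:M by apply/matrixP => i j; rewrite !mxE mul0rn.
    exact: psd_scalar.
  by rewrite subr0 mulmx0.
have [N [_ [psN [EM PN]]]] := xgetPex 0 ex.
rewrite /pucci_plus /Mneg /Mpos -/M.
set P := xget _ _ in EM PN *.
have EN : P - M = N by rewrite EM opprB addrC subrK.
rewrite EN.
have EP : P = M + N by rewrite -EN addrC subrK.
have trP : \tr P = \tr M + \tr N by rewrite EP mxtraceD.
have : c * \tr N + \tr (N *m N) = 0.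
  by rewrite -mxtraceZ -mxtraceD -mul_scalar_mx -mulmxDl -EP PN mxtrace0.
have sq : 0 <= \tr (N *m N).
  rewrite /mxtrace; apply: sumr_ge0 => i _; rewrite mxE; apply: sumr_ge0 => j _.
  have : N j i = N i j by case: psN => + _ => /matrixP /(_ i j); rewrite mxE.
  by move=> ->; rewrite -expr2 sqr_ge0.
move=> h.
have trN : \tr N <= 0.
  have : c * \tr N <= 0 by lra.
  by rewrite pmulr_rle0.
rewrite trP /M mxtrace_scalar.
have : (Lam - lam) * \tr N <= 0 by apply: mulr_ge0_le0 => //; rewrite subr_ge0.
lra.
Qed.

Lemma deriv_helper (V : normedModType R) (f : V -> R) a v (g : R -> R) :
  {for 0, continuous g} ->
  (forall h, h != 0 -> h^-1 *: (f (h *: v + a) - f a) = g h) ->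
  derivable f a v /\ 'D_v f a = g 0.
Proof.
move=> gc fg.
have hc : (fun h => h^-1 *: ((f \o shift a) (h *: v) - f a)) @ 0^' --> g 0.
  apply: cvg_trans; last exact: gc.
  apply: (@cvg_trans _ (g @ 0^')).
    apply: near_eq_cvg; near=> h.
    rewrite /= fg //.
    near: h; exact: nbhs_dnbhs_neq.
  apply: cvg_app; exact: cvg_within.
split; first exact: cvgP hc.
exact: cvg_lim hc.
Unshelve. all: by end_near.
Qed.

Lemma lin_cont (p q : R) : continuous (fun h : R => p + q * h).
Proof.
have -> : (fun h : R => p + q * h) = (fun=> p) + ((fun=> q) \* id) by [].
move=> x; apply: continuousD; first exact: cst_continuous.
apply: continuousM; first exact: cst_continuous.
by [].
Qed.


Lemma S2_shift (y : 'rV[R]_d) h i :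
  S2 (h *: ebasis R i + y) = S2 y + h * (2 * y ord0 i + h).
Proof.
rewrite /S2 (bigD1 i) //= [in RHS](bigD1 i) //=.
rewrite (eq_bigr (fun j => y ord0 j ^+ 2)); last first.
  by move=> j ji; rewrite !mxE eqxx (negbTE ji) /= mulr0 add0r.
rewrite !mxE !eqxx /= mulr1; ring.
Qed.

Definition psi (c0 k a : R) (y : 'rV[R]_d) (s : R) : R := c0 + k * S2 y + a * s.

Lemma dx_psi c0 k a i y s :
  derivable (fun y => psi c0 k a y s) y (ebasis R i) /\
  dx i (psi c0 k a) y s = k * (2 * y ord0 i).
Proof.
have key : forall h, h != 0 -> h^-1 *: (psi c0 k a (h *: ebasis R i + y) s - psi c0 k a y s) = k * (2 * y ord0 i) + k * h.
  move=> h h0; rewrite /psi S2_shift.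
  rewrite /GRing.scale /=. field. done.
have [H1 H2] := @deriv_helper _ (fun y => psi c0 k a y s) y (ebasis R i)
   (fun h => k * (2 * y ord0 i) + k * h) (lin_cont _ _ 0) key.
split => //; rewrite /dx H2; ring.
Qed.

Lemma dx_psiE c0 k a i : dx i (psi c0 k a) = fun y s => k * (2 * y ord0 i).
Proof. by apply: funext => y; apply: funext => s; case: (dx_psi c0 k a i y s). Qed.

Lemma dxx_psi c0 k a i j y s :
  derivable (fun y => dx i (psi c0 k a) y s) y (ebasis R j) /\
  dx j (dx i (psi c0 k a)) y s = (2 * k) *+ (i == j).
Proof.
rewrite dx_psiE.
have key : forall h, h != 0 -> h^-1 *: (k * (2 * (h *: ebasis R j + y) ord0 i) - k * (2 * y ord0 i)) = (2 * k) *+ (i == j) + 0 * h.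
  move=> h h0; rewrite !mxE eqxx /=.
  by case: eqP => [->|_] /=; rewrite /GRing.scale /=; field.
have [H1 H2] := @deriv_helper _ (fun y : 'rV[R]_d => k * (2 * y ord0 i)) y (ebasis R j)
   (fun h => (2 * k) *+ (i == j) + 0 * h) (lin_cont _ _ 0) key.
split => //; rewrite /dx H2; ring.
Qed.

Lemma dt_psi c0 k a x t :
  derivable (fun s => psi c0 k a x s) t 1 /\ dt (psi c0 k a) x t = a.
Proof.
have key : forall h, h != 0 -> h^-1 *: (psi c0 k a x (h *: 1 + t) - psi c0 k a x t) = a + 0 * h.
  by move=> h h0; rewrite /psi /GRing.scale /=; field.
have [H1 H2] := @deriv_helper _ (fun s => psi c0 k a x s) t 1
   (fun h => a + 0 * h) (lin_cont _ _ 0) key.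
split => //; rewrite /dt H2; ring.
Qed.


Lemma fst_S2_cont : continuous (fun z : 'rV[R]_d * R => S2 z.1).
Proof.
move=> z; apply: (@continuous_comp _ _ _ fst S2); [exact: cvg_fst | exact: S2_continuous].
Qed.

Lemma fst_enorm_cont : continuous (fun z : 'rV[R]_d * R => enorm z.1).
Proof.
move=> z; apply: (@continuous_comp _ _ _ fst (@enorm R d)); [exact: cvg_fst | exact: enorm_continuous].
Qed.

Lemma fst_coord_cont i : continuous (fun z : 'rV[R]_d * R => z.1 ord0 i).
Proof.
move=> z; apply: (@continuous_comp _ _ _ fst (fun v : 'rV[R]_d => v ord0 i)); [exact: cvg_fst | exact: coord_continuous].
Qed.

Lemma snd_cont : continuous (fun z : 'rV[R]_d * R => z.2).
Proof. move=> z; exact: cvg_snd. Qed.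

Lemma C21_psi c0 k a : C21 (psi c0 k a).
Proof.
split.
- by move=> x t i; case: (dx_psi c0 k a i x t).
- by move=> x t i j; case: (dxx_psi c0 k a i j x t).
- by move=> x t; case: (dt_psi c0 k a x t).
- split.
    have -> : uncurry2 (psi c0 k a) = (fun=> c0) + ((fun=> k) \* (fun z : 'rV[R]_d * R => S2 z.1)) + ((fun=> a) \* (fun z : 'rV[R]_d * R => z.2)).
      by apply: funext.
    move=> z; apply: continuousD; first apply: continuousD.
    + exact: cst_continuous.
    + apply: continuousM; [exact: cst_continuous | exact: fst_S2_cont].
    + apply: continuousM; [exact: cst_continuous | exact: snd_cont].
  have -> : uncurry2 (dt (psi c0 k a)) = fun=> a.
    by apply: funext => z; case: (dt_psi c0 k a z.1 z.2).
  exact: cst_continuous.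
- move=> i j; split.
    have -> : uncurry2 (dx i (psi c0 k a)) = (fun=> k) \* ((fun=> 2) \* (fun z : 'rV[R]_d * R => z.1 ord0 i)).
      by apply: funext => z; rewrite /uncurry2 dx_psiE.
    move=> z; apply: continuousM; first exact: cst_continuous.
    apply: continuousM; [exact: cst_continuous | exact: fst_coord_cont].
  have -> : uncurry2 (dx j (dx i (psi c0 k a))) = fun=> (2 * k) *+ (i == j).
    by apply: funext => z; case: (dxx_psi c0 k a i j z.1 z.2).
  exact: cst_continuous.
Qed.

Lemma hessian_psi c0 k a x t : hessian (psi c0 k a) x t = (2 * k)%:M.
Proof.
apply/matrixP => i j; rewrite !mxE.
by case: (dxx_psi c0 k a i j x t).
Qed.

Lemma cont_gt (T : topologicalType) (f : T -> R) p c :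
  {for p, continuous f} -> c < f p -> nbhs p [set q | c < f q].
Proof.
move=> fc cp.
have e0 : 0 < f p - c by rewrite subr_gt0.
have H := fc _ (nbhsx_ballx (f p) _ e0).
near=> q.
have : ball (f p) (f p - c) (f q) by near: q.
rewrite /ball /= => h.
have : f p - f q <= `|f p - f q| by exact: ler_norm.
lra.
Unshelve. all: by end_near.
Qed.

Lemma S2_ge0 (y : 'rV[R]_d) : 0 <= S2 y.
Proof. by apply: sumr_ge0 => i _; rewrite sqr_ge0. Qed.

Lemma S2_enorm (y : 'rV[R]_d) : S2 y = enorm y ^+ 2.
Proof. by rewrite enormE sqr_sqrtr // S2_ge0. Qed.

Lemma coord_le_enorm (y : 'rV[R]_d) i : `|y ord0 i| <= enorm y.
Proof.
rewrite enormE -(sqrtr_sqr (y ord0 i)) ler_sqrt ?S2_ge0 //.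
rewrite /S2 (bigD1 i) //= lerDl; apply: sumr_ge0 => j _; exact: sqr_ge0.
Qed.

End T.
Arguments psi {R d}.
Arguments S2 {R d}.

Theorem lemma6p1 (R : realType) (d : nat) (Lam C0 : R) :
  0 < Lam -> 0 < C0 ->
  exists C : R, forall (lam c0 L r : R) (w : 'rV[R]_d -> R -> R),
    0 < lam -> lam < Lam -> 0 < c0 -> c0 < C0 -> 0 < r -> r < L ->
    usc_on_closed L w ->
    visc_subsol lam Lam L w ->
    (forall x, Qcyl_closed L x 0 -> w x 0 <= c0) ->
    (forall x t, Qcyl_closed L x t -> w x t <= C0) ->
    forall x t, Qcyl_closed r x t -> w x t <= c0 + C * (r ^+ 2 / L ^+ 2).
Proof.
move=> Lam0 C00.
pose A := 2 * Lam * C0 * d%:R + C0 + 1.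
have hAC : C0 < A.
  have : 0 <= Lam * C0 * d%:R by rewrite mulr_ge0 // mulr_ge0 // ltW.
  rewrite /A; lra.
have A0 : 0 < A by lra.
exists (C0 + A) => lam c0 L r w lam0 lamL c00 c0C r0 rL usc vis init bnd x t Qr.
have L0 : 0 < L by apply: lt_trans rL.
set u := L ^+ 2.
have u0 : 0 < u by rewrite exprn_gt0.
pose k := C0 / u; pose a := A / u.
have k0 : 0 < k by rewrite divr_gt0.
have a0 : 0 < a by rewrite divr_gt0.
have ku : k * u = C0 by rewrite /k mulrVK // unitfE gt_eqF.
have au : a * u = A by rewrite /a mulrVK // unitfE gt_eqF.
pose ps := @psi R d c0 k a.
have ps_ge : forall (y : 'rV[R]_d) s, 0 <= s -> c0 + k * S2 y + a * s = ps y s by [].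
pose K := [set z : 'rV[R]_d * R | Qcyl_closed L z.1 z.2].
have claim : forall z, K z -> w z.1 z.2 <= ps z.1 z.2.
  move=> z Kz; rewrite leNgt; apply/negP => Hz.
  pose G := fun z : 'rV[R]_d * R => w z.1 z.2 - ps z.1 z.2.
  pose S := [set v : 'rV[R]_d | forall i, `[(- L), L]%classic (v ord0 i)] `*` `[0, u]%classic.
  have cS : compact S.
    apply: compact_setX; last exact: segment_compact.
    apply: (@rV_compact _ _ (fun=> `[(- L), L]%classic)) => _.
    exact: segment_compact.
  have KS : K `<=` S.
    move=> [y s] [/andP [s0 su] yL]; split => /=.
      move=> i; rewrite /= in_itv /= -ler_norml.
      by have := le_trans (@coord_le_enorm R d y i) yL.
    by rewrite /= in_itv /= s0 su.
  have clK : closed K.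
    move=> [y s] clp.
    have Hm : forall (f : 'rV[R]_d * R -> R) c, continuous f -> c < f (y, s) -> exists2 q, K q & c < f q.
      move=> f c fc cf.
      have [q [Kq cq]] := clp _ (@cont_gt R _ f (y, s) c (fc (y, s)) cf).
      by exists q.
    split; first (apply/andP; split).
    - rewrite leNgt; apply/negP => s0.
      have s0' : 0 < - (y, s).2 by rewrite /= oppr_gt0.
      have [q [/andP [q0 _] _] /=] := Hm (fun z => - z.2) 0 (fun z => cvgN (@snd_cont R d z)) s0'.
      by rewrite oppr_gt0 ltNge q0.
    - rewrite leNgt; apply/negP => su.
      have [q [/andP [_ qu] _] /=] := Hm (fun z => z.2) u (@snd_cont R d) su.
      by rewrite ltNge qu.
    - rewrite leNgt; apply/negP => yL.
      have [q [_ qL] /=] := Hm (fun z => enorm z.1) L (@fst_enorm_cont R d) yL.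
      by rewrite ltNge qL.
  have cK : compact K by apply: subclosed_compact clK cS KS.
  have ps_c0 : forall y s, 0 <= s -> c0 <= ps y s.
    move=> y s s0; rewrite /ps /psi.
    have : 0 <= k * S2 y by rewrite mulr_ge0 ?S2_ge0 // ltW.
    have : 0 <= a * s by rewrite mulr_ge0 // ltW.
    lra.
  have Gbound : forall q, K q -> G q <= C0.
    move=> [y s] Kq; have [/andP [s0 _] _] := Kq; rewrite /G /=.
    have := bnd y s Kq; have := ps_c0 y s s0; lra.
  have Gusc : forall p, K p -> forall e : R, 0 < e -> nbhs p [set q | K q -> G q < G p + e].
    move=> [x0 t0] Kp e e0.
    have e20 : 0 < e / 2 by rewrite divr_gt0.
    have [del del0 Hdel] := usc x0 t0 Kp (e / 2) e20.
    have N1 := @nbhs_cyl R d x0 t0 del del0.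
    have psc : continuous (uncurry2 ps) by case: (@C21_psi R d c0 k a) => _ _ _ [].
    have lt1 : ps x0 t0 - e / 2 < uncurry2 ps (x0, t0) by rewrite /uncurry2 /=; lra.
    have N2 := @cont_gt R _ (uncurry2 ps) (x0, t0) _ (psc (x0, t0)) lt1.
    apply: filterS2 N1 N2 => -[y s] /= [h1 h2] h3 Kq.
    have := Hdel y s Kq h1 h2; rewrite /G /uncurry2 /= in h3 *.
    have -> : e = e / 2 + e / 2 by rewrite -splitr.
    lra.
  have [p Kp pmax] := @usc_attains_max R _ K G C0 cK (ex_intro _ z Kz) Gbound Gusc.
  have Gp : 0 < G p.
    by apply: lt_le_trans (pmax z Kz); rewrite /G subr_gt0.
  case: p Kp pmax Gp => x0 t0 Kp pmax Gp.
  have [/andP [t00 t0u] x0L] := Kp.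
  rewrite /G /= in Gp.
  have t0pos : 0 < t0.
    rewrite lt_neqAle t00 andbT; apply/negP => /eqP t0e; rewrite -t0e in Kp Gp.
    have := init x0 Kp; have := ps_c0 x0 0 (lexx 0); lra.
  have t0lt : t0 < u.
    rewrite lt_neqAle t0u andbT; apply/negP => /eqP t0e; rewrite t0e in Kp Gp.
    have := bnd x0 u Kp.
    have : A <= ps x0 u - c0.
      rewrite /ps /psi -au.
      have : 0 <= k * S2 x0 by rewrite mulr_ge0 ?S2_ge0 // ltW.
      lra.
    lra.
  have x0lt : enorm x0 < L.
    rewrite lt_neqAle x0L andbT; apply/negP => /eqP x0e.
    have S2e : S2 x0 = u by rewrite S2_enorm x0e.
    have := bnd x0 t0 Kp.
    have : C0 <= ps x0 t0 - c0.
      rewrite /ps /psi S2e ku.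
      have : 0 <= a * t0 by rewrite mulr_ge0 // ltW.
      lra.
    lra.
  have Qp : Qcyl L x0 t0 by split => //; apply/andP; split.
  have loc : exists2 r0 : R, 0 < r0 & forall y s, Qcyl L y s ->
        enorm (y - x0) < r0 -> `|s - t0| < r0 ->
        w y s - ps y s <= w x0 t0 - ps x0 t0.
    exists 1 => // y s [/andP [ys1 ys2] ys3] _ _.
    have Kq : K (y, s) by split => //; [apply/andP; split; exact: ltW | exact: ltW].
    exact: (pmax (y, s) Kq).
  have := vis ps x0 t0 (@C21_psi R d c0 k a) Qp loc.
  rewrite (@hessian_psi R d) .
  case: (@dt_psi R d c0 k a x0 t0) => _ ->.
  have := @pucci_scalar R d lam Lam (2 * k) (ltW lamL) ltac:(by rewrite mulr_gt0).
  have : Lam * ((2 * k) *+ d) = 2 * Lam * C0 * d%:R / u.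
    by rewrite -mulr_natr -ku; field; rewrite gt_eqF.
  move=> ->.
  have : a = (2 * Lam * C0 * d%:R + C0 + 1) / u by [].
  move=> ->.
  have : 0 < (C0 + 1) / u by rewrite divr_gt0 // addr_gt0.
  rewrite !mulrDl; lra.
have [/andP [t0 tr] xr] := Qr.
have Kx : K (x, t).
  split; first (apply/andP; split => //; apply: le_trans tr _).
    by rewrite lerXn2r ?ltW // ?rL //; rewrite nnegrE ltW.
  exact: le_trans xr (ltW rL).
have := claim _ Kx; rewrite /= /ps /psi.
have S2r : S2 x <= r ^+ 2.
  have en0 : 0 <= enorm x by apply: sqrtr_ge0.
  rewrite S2_enorm; move: en0 xr; set e := enorm x => en0 xr.
  rewrite !expr2; nra.
have h1 : k * S2 x <= k * r ^+ 2 by rewrite ler_wpM2l // ltW.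
have h2 : a * t <= a * r ^+ 2 by rewrite ler_wpM2l // ltW.
have h3 : (C0 + A) * (r ^+ 2 / u) = k * r ^+ 2 + a * r ^+ 2.
  by rewrite /k /a; field; rewrite gt_eqF.
rewrite h3; lra.
Qed.
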